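(* Let $d$ be a positive even integer, $n=\frac{d^2}{2}$, and $P_m(x)=1+x+\cdots+x^{m-1}\in\mathbb{F}_2[x]$. Then: (1) $P_{d+1}(x)$ is invertible modulo $x^n-1$, with $$P_{d+1}(x)^{-1}\equiv x\big(1+x^{d+1}+x^{2(d+1)}+\cdots+x^{(\frac d2-1)(d+1)}\big)+x^{\frac d2+1}\big(1+x^{d+1}+\cdots+x^{(\frac d2-2)(d+1)}\big)\pmod{x^n-1},$$ and $\mathrm{wt}(P_{d+1}(x)^{-1})=d-1$. (2) Modulo $x^n-1$, $$P_n(x)\equiv P_{d+1}(x)\,x^{\frac d2+1}\big(1+x^{d+1}+\cdots+x^{(\frac d2-2)(d+1)}\big)+\big(1+x+x^2+\cdots+x^{\frac d2}\big)$$ and $$P_n(x)\equiv P_{d+1}(x)^{-1}\big(1+x+\cdots+x^{\frac d2-1}\big)+\big(1+x^{d+1}+x^{2(d+1)}+\cdots+x^{(\frac d2-1)(d+1)}\big).$$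
   Context: Weight is the number of nonzero coefficients of the representative of degree $<n$; an empty sum is $0$. *)

(* Defs.v *)
From mathcomp Require Import all_boot all_order all_algebra.
Set Implicit Arguments. Unset Strict Implicit. Unset Printing Implicit Defensive.
Import GRing.Theory.
Local Open Scope ring_scope.

Notation F2poly := {poly 'F_2}.

Definition Pm (m : nat) : F2poly := \sum_(i < m) 'X^i.

Definition xn1 (n : nat) : F2poly := 'X^n - 1.

Definition congr_mod (n : nat) (p q : F2poly) : Prop := p %% xn1 n = q %% xn1 n.

Definition inv_mod (n : nat) (p q : F2poly) : Prop := congr_mod n (p * q) 1.

Definition wt_mod (n : nat) (p : F2poly) : nat :=
  count (fun c : 'F_2 => c != 0) (polyseq (p %% xn1 n)).

(* Main.v *)
Require Import Defs.
From mathcomp Require Import all_boot all_order all_algebra.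
From mathcomp Require Import ring zify.
Import GRing.Theory.
Local Open Scope ring_scope.

Lemma two0 : (2%:R : F2poly) = 0.
Proof.
have h : (2%:R : 'F_2) = 0 by apply/eqP; rewrite (pcharf0 (pchar_Fp _)).
by rewrite -(rmorph_nat (@polyC _)) h.
Qed.

Lemma char2 (a b c : F2poly) : a - b = 2%:R * c -> a = b.
Proof. by rewrite two0 mul0r => /eqP; rewrite subr_eq0 => /eqP. Qed.

Section Alg.
Variables (x H N Z A B P Ph Ph1 Pn E : F2poly).
Hypotheses (hx : x - 1 != 0) (eZ : x * H * Z = N)
  (eP : (x - 1) * P = x * H * H - 1)
  (eA : (x * H * H - 1) * A = N * H - 1)
  (eB : (x * H * H - 1) * B = Z - 1)
  (e1 : (x - 1) * Ph1 = x * H - 1)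
  (eh : (x - 1) * Ph = H - 1)
  (en : (x - 1) * Pn = N - 1)
  (eE : (x * x - 1) * E = H * H - 1).

Lemma alg1 : P * (x * A + x * H * B) = 1 + (N - 1) * Ph1.
Proof.
apply: (mulfI hx).
have -> : (x-1)*(P*(x*A+x*H*B)) = x*((x*H*H-1)*A) + x*H*((x*H*H-1)*B)
  by rewrite mulrA eP; ring.
have -> : (x-1)*(1+(N-1)*Ph1) = (x-1) + (N-1)*((x-1)*Ph1) by ring.
rewrite eA eB e1 -eZ. apply: (@char2 _ _ (x*H*Z - x)); ring.
Qed.

Lemma alg2 : Pn = P * (x * H * B) + Ph1.
Proof.
apply: (mulfI hx).
have -> : (x-1)*(P*(x*H*B) + Ph1) = x*H*((x*H*H-1)*B) + (x-1)*Ph1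
  by rewrite mulrDr mulrA eP; ring.
rewrite en eB e1 -eZ; ring.
Qed.

Lemma algK1 : P * A = N * Ph + Pn.
Proof.
apply: (mulfI hx).
have -> : (x-1)*(P*A) = (x*H*H-1)*A by rewrite mulrA eP.
have -> : (x-1)*(N*Ph+Pn) = N*((x-1)*Ph) + (x-1)*Pn by ring.
rewrite eA eh en; ring.
Qed.

Lemma algK2 : P = 1 + x * (x + 1) * E.
Proof.
apply: (mulfI hx).
have -> : (x-1)*(1 + x*(x+1)*E) = (x-1) + x*((x*x-1)*E) by ring.
rewrite eP eE; ring.
Qed.

Lemma alg3 : (N - 1) %| (x * A + x * H * B) * Ph + A - Pn.
Proof.
set Q := x * A + x * H * B.
set D := Q * Ph + A - Pn.
set T := Ph + Ph1 * Ph - x * E.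
have PD : P * D = (N - 1) * T.
  have -> : P * D = (P * Q) * Ph + P * A - P * Pn by rewrite /D; ring.
  rewrite alg1 algK1 {1}algK2.
  have eN : N = (x - 1) * Pn + 1 by rewrite en; ring.
  rewrite /T eN; apply: (@char2 _ _ (Ph - x * E * Pn)); ring.
have -> : D = (N - 1) * (Q * T - Ph1 * D).
  have -> : (N - 1) * (Q * T - Ph1 * D) = Q * ((N - 1) * T) - ((N - 1) * Ph1) * D by ring.
  rewrite -PD.
  have -> : Q * (P * D) = (P * Q) * D by ring.
  rewrite alg1; ring.
exact: dvdp_mulIl.
Qed.

End Alg.
Lemma congrP n p q : xn1 n %| p - q -> congr_mod n p q.
Proof.
move=> /modp_eq0P H; rewrite /congr_mod.
by rewrite -[p](subrK q) modpD H add0r.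
Qed.

Lemma congr_dvd n p q : congr_mod n p q -> xn1 n %| p - q.
Proof. by rewrite /congr_mod => H; apply/modp_eq0P; rewrite modpD modpN H subrr. Qed.

Lemma PmX (k : nat) : ('X - 1) * Pm k = 'X^k - 1.
Proof. by rewrite /Pm subrX1. Qed.

Lemma Xsub1_neq0 : ('X - 1 : F2poly) != 0.
Proof. by rewrite -polyC1 polyXsubC_eq0. Qed.

Lemma coef_sumX (s : seq nat) i :
  (\sum_(e <- s) 'X^e : F2poly)`_i = (count_mem i s)%:R.
Proof.
elim: s => [|e s IH]; first by rewrite big_nil coef0.
by rewrite big_cons coefD IH coefXn /= natrD eq_sym.
Qed.

Lemma size_sumX (n : nat) (s : seq nat) : all (fun e => e < n)%N s ->
  (size ((\sum_(e <- s) 'X^e)%R : F2poly) <= n)%N.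
Proof.
elim: s => [|e s IH]; first by rewrite big_nil size_poly0.
rewrite /= big_cons => /andP[he hs].
apply: (leq_trans (size_polyD _ _)); rewrite geq_max size_polyXn he.
exact: IH.
Qed.

Lemma wt_sum (n : nat) (s : seq nat) : uniq s -> all (fun e => e < n)%N s ->
  count (fun c : 'F_2 => c != 0) (polyseq (\sum_(e <- s) 'X^e : F2poly)) = size s.
Proof.
move=> us hs.
set p := \sum_(e <- s) 'X^e : F2poly.
have sp := @size_sumX n s hs.
rewrite -[polyseq p](mkseq_nth 0) /mkseq count_map.
have -> : count (preim (nth 0 p) (fun c : 'F_2 => c != 0)) (iota 0 (size p))
   = count (fun i => i \in s) (iota 0 n).
  rewrite -(subnKC sp) iotaD count_cat.
  have -> : count (fun i => i \in s) (iota (0 + size p) (n - size p)) = 0%N.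
    apply/eqP; rewrite eqn0Ngt -has_count; apply/hasPn => i.
    rewrite mem_iota add0n => /andP[hi _]; apply/negP => his.
    have := coef_sumX s i; rewrite -/p nth_default // count_uniq_mem // his.
    by move=> /esym/eqP; rewrite oner_eq0.
  rewrite addn0; apply: eq_count => i /=.
  rewrite coef_sumX count_uniq_mem //.
  by case: (i \in s); rewrite ?oner_eq0 ?eqxx.
rewrite -size_filter; apply/perm_size/uniq_perm.
- by apply: filter_uniq; apply: iota_uniq.
- exact: us.
move=> i; rewrite mem_filter mem_iota add0n /=.
case his: (i \in s) => //=.
by move/allP: hs => /(_ i his).
Qed.
Theorem lemma3 (d : nat) (hd : (0 < d)%N) (heven : ~~ odd d) :
  let n := (d ^ 2)./2 in
  let A : F2poly := \sum_(i < d./2) 'X^(i * d.+1) in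
  let B : F2poly := \sum_(i < d./2 - 1) 'X^(i * d.+1) in
  let Q : F2poly := 'X * A + 'X^((d./2).+1) * B in
  (* (1) invertibility, the explicit inverse, and its weight *)
  (exists q : F2poly, inv_mod n (Pm d.+1) q) /\
  (forall q : F2poly, inv_mod n (Pm d.+1) q ->
      congr_mod n q Q /\ wt_mod n q = (d - 1)%N) /\
  (* (2) the two congruences for P_n *)
  congr_mod n (Pm n) (Pm d.+1 * ('X^((d./2).+1) * B) + Pm (d./2).+1) /\
  (forall q : F2poly, inv_mod n (Pm d.+1) q ->
      congr_mod n (Pm n) (q * Pm (d./2) + A)).
Proof.
have eh : d = (d./2).*2 by rewrite -[d in LHS]odd_double_half (negbTE heven).
move: (d./2) eh => h eh; subst d.
have h0 : (0 < h)%N by move: hd; rewrite double_gt0.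
have -> : ((h.*2)^2)./2 = (h*h).*2.
  have -> : ((h.*2)^2 = ((h*h).*2).*2)%N by rewrite -!muln2 expnMn -mulnn; ring.
  by rewrite doubleK.
move=> n A B Q.
set x : F2poly := 'X.
set H : F2poly := 'X^h.
set N : F2poly := 'X^n.
set Y : F2poly := x * H * H.
set Z : F2poly := Y ^+ (h - 1).
set E : F2poly := \sum_(i < h) (x * x) ^+ i.
have fY : 'X^(h.*2.+1) = Y by rewrite /Y /x /H exprS -mulrA -exprD addnn.
have fXi i : 'X^(i * h.*2.+1) = Y ^+ i :> F2poly by rewrite mulnC exprM fY.
have fA : (x * H * H - 1) * A = N * H - 1.
  rewrite /A (eq_bigr (fun i : 'I_h => Y ^+ i)); last by move=> i _; rewrite fXi.
  rewrite -/Y -subrX1 -fY -exprM /N /H -exprD; congr (_ ^+ _ - 1); rewrite /n; lia.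
have fB : (x * H * H - 1) * B = Z - 1.
  rewrite /B (eq_bigr (fun i : 'I_(h - 1) => Y ^+ i)); last by move=> i _; rewrite fXi.
  by rewrite -/Y -subrX1.
have fZ : x * H * Z = N.
  rewrite /Z -fY /x /H -exprS -exprM -exprD /N; congr (_ ^+ _); rewrite /n; nia.
have fP : (x - 1) * Pm h.*2.+1 = x * H * H - 1 by rewrite PmX fY.
have f1 : (x - 1) * Pm h.+1 = x * H - 1 by rewrite PmX exprS.
have fh : (x - 1) * Pm h = H - 1 by rewrite PmX.
have fn : (x - 1) * Pm n = N - 1 by rewrite PmX.
have fE : (x * x - 1) * E = H * H - 1 by rewrite -subrX1 exprMn.
have hx : x - 1 != 0 := Xsub1_neq0.
have eQ : Q = x * A + x * H * B by rewrite /Q exprS.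
have eXh : ('X^(h.+1) : F2poly) = x * H by rewrite exprS.

have G1 := alg1 _ _ _ _ _ _ _ _ hx fZ fP fA fB f1.
have Xn : xn1 n = N - 1 by [].
have uniq_inv q : inv_mod n (Pm h.*2.+1) q -> xn1 n %| q - Q.
  move=> /congr_dvd hq.
  have -> : q - Q = Q * (Pm h.*2.+1 * q - 1) - q * (Pm h.*2.+1 * Q - 1) by ring.
  rewrite eQ G1 Xn; apply: dvdp_sub; first exact: dvdp_mull.
  have -> : 1 + (N - 1) * Pm h.+1 - 1 = (N - 1) * Pm h.+1 by ring.
  by apply: dvdp_mull; apply: dvdp_mulIl.
split.
  exists Q; apply: congrP; rewrite eQ G1 Xn.
  have -> : 1 + (N - 1) * Pm h.+1 - 1 = (N - 1) * Pm h.+1 by ring.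
  exact: dvdp_mulIl.
split.
  move=> q hq; have cq := @congrP n _ _ (uniq_inv q hq); split => //.
  rewrite /wt_mod cq.
  pose s := [seq (i * h.*2.+1).+1 | i <- iota 0 h] ++
            [seq (h.+1 + i * h.*2.+1)%N | i <- iota 0 (h - 1)].
  have eQs : Q = \sum_(e <- s) 'X^e.
    rewrite big_cat !big_map /Q /A /B !mulr_sumr.
    have ii k : iota 0 k = index_iota 0 k by rewrite /index_iota subn0.
    congr (_ + _); rewrite ii big_mkord;
      apply: eq_bigr => i _; [by rewrite exprS | by rewrite exprD].
  have us : uniq s.
    rewrite cat_uniq !map_inj_uniq ?iota_uniq //= ?andbT.
    - apply/hasPn => e /mapP [j _ ->]; apply/mapP => [[i _]] /eqP.
      apply/negP; case: (leqP i j) => hij; nia.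
    - by move=> i j /eqP; rewrite eqn_add2l eqn_pmul2r // => /eqP.
    - by move=> i j /eqP; rewrite eqSS eqn_pmul2r // => /eqP.
  have hal : all (fun e => e < n)%N s.
    rewrite all_cat; apply/andP; split; apply/allP => e /mapP [i];
      rewrite mem_iota add0n => /andP [_ hi] ->; rewrite /n; nia.
  have ss : size s = (h.*2 - 1)%N by rewrite size_cat !size_map !size_iota; lia.
  rewrite modp_small; first by rewrite eQs (@wt_sum n s us hal) ss.
  rewrite Xn /N -polyC1 size_XnsubC; last by rewrite /n; nia.
  by rewrite ltnS eQs; apply: size_sumX.
split.
  apply: congrP; rewrite eXh (alg2 _ _ _ _ _ _ _ _ hx fZ fP fB f1 fn) subrr; exact: dvdp0.
move=> q hq; apply: congrP.
have D := alg3 _ _ _ _ _ _ _ _ _ _ _ hx fZ fP fA fB f1 fh fn fE.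
rewrite -eQ -Xn in D.
have -> : Pm n - (q * Pm h + A) = - (Q * Pm h + A - Pm n) - (q - Q) * Pm h by ring.
apply: dvdp_sub; first by rewrite dvdpNr.
by apply: dvdp_mulr; apply: uniq_inv.
Qed.
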